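(* Let $\alpha>-1$, $d\in\widetilde{D}$ (with the convention $d_{-1}=0$), $p=(L_n^{(\alpha+1)})_{n\in\mathbb{N}_0}$, $q=(L_n^{(\alpha)})_{n\in\mathbb{N}_0}$, and let $T=E_{p,d}$ be regarded as an operator in $H(q)$ with domain $\mathcal{P}_c$. For $g=\sum_kg_kq_k\in H(q)$: (i) $g\in D(T^* )$ iff $\sum_{k=0}^\infty\left|g_k\bar d_k+(\bar d_k-\bar d_{k-1})\sum_{t=0}^{k-1}g_t\right|^2<\infty$; (ii) for $g\in D(T^* )$, $T^*g=\sum_{k=0}^\infty\left(g_k\bar d_k+(\bar d_k-\bar d_{k-1})\sum_{t=0}^{k-1}g_t\right)q_k$; (iii) for $s\in\mathbb{N}_0$, $q_s\in D(T^* )$ iff $(\bar d_k-\bar d_{k-1})_{k\in\mathbb{N}_0}\in\ell_2$; (iv) if $(\bar d_k-\bar d_{k-1})_{k\in\mathbb{N}_0}\in\ell_2$, then $T$ is closable and (a) $g\in D(\overline{T})$ iff $\sum_{s=0}^\infty\left|g_sd_s+\sum_{k=s+1}^\infty(d_k-d_{k-1})g_k\right|^2<\infty$, (b) for $g\in D(\overline{T})$, $\overline{T}g=\sum_{s=0}^\infty\left(g_sd_s+\sum_{k=s+1}^\infty(d_k-d_{k-1})g_k\right)q_s$.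
   Context: $\mathcal{P}_c$ is the space of polynomials in one real variable with complex coefficients. For $\beta>-1$, $L_n^{(\beta)}(x)=\sum_{k=0}^n\frac{(-1)^k}{k!}\binom{n+\beta}{n-k}x^k$ is the generalized Laguerre polynomial. For a sequence $Q=(Q_n)$ of polynomials with $\deg Q_n=n$, $H(Q)$ is the completion of $\mathcal{P}_c$ with respect to the inner product making $(Q_n)$ orthonormal (so here the unnormalized $L_n^{(\alpha)}$ are orthonormal); $g\in H(Q)$ is written $g=\sum_kg_kQ_k$, $(g_k)\in\ell_2$. $\widetilde{D}$ is the set of non-constant sequences of non-zero complex numbers. For a polynomial sequence $p$ and $d\in\widetilde{D}$, $E_{p,d}$ is the linear map on $\mathcal{P}_c$ with $E_{p,d}(p_n)=d_np_n$. $T^*$ denotes the adjoint and $\overline{T}$ the closure. *)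

(* Defs.v *)
From HB Require Import structures.
From mathcomp Require Import all_boot all_order all_algebra.
From mathcomp Require Import all_classical all_reals all_analysis.
From mathcomp Require Import complex.
Set Implicit Arguments. Unset Strict Implicit. Unset Printing Implicit Defensive.
Import Order.TTheory GRing.Theory Num.Theory.
Import numFieldNormedType.Exports.
Local Open Scope classical_set_scope.
Local Open Scope ring_scope.

Section Defs.
Variable R : realType.
Local Notation C := R[i].

Definition sqn (z : C) : R := complex.Re z ^+ 2 + complex.Im z ^+ 2.

Definition l2 (a : nat -> C) : Prop := cvgn (series (fun k => sqn (a k))).

(* squared l_2 norm (meaningful for a in l_2) *)
Definition l2norm2 (a : nat -> C) : R := limn (series (fun k => sqn (a k))).

Definition csum (u : nat -> C) : C :=
  ((limn (series (fun k => complex.Re (u k)))) +i* (limn (series (fun k => complex.Im (u k)))))%C.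

Definition ip (a b : nat -> C) : C := csum (fun k => a k * (b k)^*).

Definition gbinom (x : R) (m : nat) : R :=
  (\prod_(i < m) (x - i%:R)) / (m`!)%:R.

Definition laguerre (beta : R) (n : nat) : {poly C} :=
  \poly_(k < n.+1) ((((-1) ^+ k) / (k`!)%:R * gbinom (n%:R + beta) (n - k))%:C)%C.

Definition Dtilde (d : nat -> C) : Prop :=
  (forall n, d n != 0) /\ (exists m n, d m != d n).

Definition prevseq (d : nat -> C) (n : nat) : C :=
  if n is n'.+1 then d n' else 0.

Definition combo (Q : nat -> {poly C}) (a : nat -> C) (N : nat) : {poly C} :=
  \sum_(k < N) a k *: Q k.

(* The operator T (a linear map on P_c), regarded as an operator in H(Q) with
   domain P_c, where H(Q) is identified with l_2 via g = sum_k g_k Q_k.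
   [opgraph Q T a b] : the pair (a, b) of coefficient sequences belongs to the
   graph, i.e. a, b are finitely supported and T (sum a_k Q_k) = sum b_k Q_k. *)
Definition opgraph (Q : nat -> {poly C}) (T : {poly C} -> {poly C})
    (a b : nat -> C) : Prop :=
  exists N : nat, (forall k, (N <= k)%N -> a k = 0 /\ b k = 0) /\
    T (combo Q a N) = combo Q b N.

(* [adj_rel Q T g h] : g is in D(T^* ) and T^* g = h, i.e. <T f, g> = <f, h>
   for all f in D(T) = P_c. *)
Definition adj_rel (Q : nat -> {poly C}) (T : {poly C} -> {poly C})
    (g h : nat -> C) : Prop :=
  l2 g /\ l2 h /\ forall a b, opgraph Q T a b -> ip b g = ip a h.

Definition adj_dom (Q : nat -> {poly C}) (T : {poly C} -> {poly C})
    (g : nat -> C) : Prop := exists h, adj_rel Q T g h.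

(* [clos_rel Q T g h] : (g, h) belongs to the closure of the graph of T in
   H(Q) x H(Q). *)
Definition clos_rel (Q : nat -> {poly C}) (T : {poly C} -> {poly C})
    (g h : nat -> C) : Prop :=
  l2 g /\ l2 h /\
  exists A B : nat -> nat -> C,
    (forall n, opgraph Q T (A n) (B n)) /\
    (fun n => l2norm2 (fun k => A n k - g k)) @ \oo --> (0 : R) /\
    (fun n => l2norm2 (fun k => B n k - h k)) @ \oo --> (0 : R).

Definition closable (Q : nat -> {poly C}) (T : {poly C} -> {poly C}) : Prop :=
  forall g h h', clos_rel Q T g h -> clos_rel Q T g h' -> h = h'.

Definition clos_dom (Q : nat -> {poly C}) (T : {poly C} -> {poly C})
    (g : nat -> C) : Prop := exists h, clos_rel Q T g h.

End Defs.

(* Main.v *)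
Require Import Defs.
From HB Require Import structures.
From mathcomp Require Import all_boot all_order all_algebra.
From mathcomp Require Import all_classical all_reals all_analysis.
From mathcomp Require Import complex.
Import Order.TTheory GRing.Theory Num.Theory.
Import numFieldNormedType.Exports.
From mathcomp Require Import ring lra.
Local Open Scope ring_scope.

Set Implicit Arguments. Unset Strict Implicit. Unset Printing Implicit Defensive.


Section Ana.
Variable R : realType.
Local Notation C := R[i].

Lemma sqn_ge0 (z : C) : 0 <= sqn z.
Proof. by rewrite /sqn addr_ge0 // sqr_ge0. Qed.

Lemma sqn_conj (z : C) : sqn (z^*) = sqn z.
Proof. by case: z => a b; rewrite /sqn /= sqrrN. Qed.

Lemma sqnD (z w : C) : sqn (z + w) <= 2 * (sqn z + sqn w).
Proof.
case: z => a b; case: w => c e; rewrite /sqn /=.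
have := sqr_ge0 (a - c); have := sqr_ge0 (b - e); nra.
Qed.

Lemma sqnB (z w : C) : sqn (z - w) <= 2 * (sqn z + sqn w).
Proof.
case: z => a b; case: w => c e; rewrite /sqn /=.
have := sqr_ge0 (a + c); have := sqr_ge0 (b + e); nra.
Qed.

Lemma sqnM (z w : C) : sqn (z * w) = sqn z * sqn w.
Proof. case: z => a b; case: w => c e; rewrite /sqn /=; ring. Qed.

Lemma sqn0 : sqn (0 : C) = 0.
Proof. by rewrite /sqn /= expr0n /= addr0. Qed.

Lemma sqn_eq0 (z : C) : sqn z = 0 -> z = 0.
Proof.
case: z => a b; rewrite /sqn /= => h.
have ha : a = 0 by apply/eqP; rewrite -sqrf_eq0; apply/eqP; nra.
have hb : b = 0 by apply/eqP; rewrite -sqrf_eq0; apply/eqP; nra.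
by rewrite ha hb.
Qed.

Lemma Re_prod_bound (z w : C) (e : R) : 0 < e ->
  2 * e * `|complex.Re (z * w)| <= sqn z + e ^+ 2 * sqn w.
Proof.
case: z => a b; case: w => c f; rewrite /sqn /= => he.
have [h|h] := lerP 0 (a * c - b * f).
  rewrite ger0_norm //.
  have := sqr_ge0 (a - e * c); have := sqr_ge0 (b + e * f); nra.
rewrite ltr0_norm //.
have := sqr_ge0 (a + e * c); have := sqr_ge0 (b - e * f); nra.
Qed.

Lemma Im_prod_bound (z w : C) (e : R) : 0 < e ->
  2 * e * `|complex.Im (z * w)| <= sqn z + e ^+ 2 * sqn w.
Proof.
case: z => a b; case: w => c f; rewrite /sqn /= => he.
have [h|h] := lerP 0 (a * f + b * c).
  rewrite ger0_norm //.
  have := sqr_ge0 (a - e * f); have := sqr_ge0 (b - e * c); nra.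
rewrite ltr0_norm //.
have := sqr_ge0 (a + e * f); have := sqr_ge0 (b + e * c); nra.
Qed.


Definition bnd (u : nat -> R) := exists M, forall n, series u n <= M.

Lemma seriesE (u : nat -> R) n : series u n = \sum_(k < n) u k.
Proof. by rewrite /series /= big_mkord. Qed.

Lemma series_nd (u : nat -> R) : (forall k, 0 <= u k) ->
  {homo series u : n m / (n <= m)%N >-> n <= m}.
Proof. by move=> h n m nm; apply: (nondecreasing_series (P := xpredT)). Qed.

Lemma bnd_cvg (u : nat -> R) : (forall k, 0 <= u k) -> bnd u -> cvgn (series u).
Proof.
move=> h [M hM]; apply: nondecreasing_is_cvgn; first exact: series_nd.
by exists M => _ [n _ <-]; exact: hM.
Qed.

Lemma le_lim (u : nat -> R) n : (forall k, 0 <= u k) -> cvgn (series u) ->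
  series u n <= limn (series u).
Proof. by move=> h hc; apply: nondecreasing_cvgn_le => //; exact: series_nd. Qed.

Lemma cvg_bnd (u : nat -> R) : (forall k, 0 <= u k) -> cvgn (series u) -> bnd u.
Proof. by move=> h hc; exists (limn (series u)) => n; exact: le_lim. Qed.

Lemma lim_le (s : nat -> R) M : cvgn s -> (forall n, s n <= M) -> limn s <= M.
Proof. by move=> hc hM; apply: limr_le => //; exact: nearW. Qed.

Lemma lim_ge (s : nat -> R) M : cvgn s -> (forall n, M <= s n) -> M <= limn s.
Proof. by move=> hc hM; apply: limr_ge => //; exact: nearW. Qed.

Lemma bnd_le (u v : nat -> R) : (forall k, u k <= v k) -> bnd v -> bnd u.
Proof.
move=> h [M hM]; exists M => n; apply: le_trans (hM n).
by rewrite !seriesE; apply: ler_sum => k _.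
Qed.

Lemma bnd_add (u v : nat -> R) : bnd u -> bnd v -> bnd (fun k => u k + v k).
Proof.
move=> [M hM] [M' hM']; exists (M + M') => n.
by rewrite seriesE big_split /= -!seriesE lerD.
Qed.

Lemma bnd_scale (u : nat -> R) c : 0 <= c -> bnd u -> bnd (fun k => c * u k).
Proof.
move=> hc [M hM]; exists (c * M) => n.
by rewrite seriesE -mulr_sumr -seriesE ler_wpM2l.
Qed.

Lemma series_fin (u : nat -> R) N n : (forall k, (N <= k)%N -> u k = 0) ->
  (N <= n)%N -> series u n = series u N.
Proof.
move=> h hn; rewrite /series /= (big_cat_nat (leq0n N) hn) /=.
have -> : \sum_(N <= k < n) u k = 0.
  by rewrite big_nat_cond big1 // => k /andP [/andP [hk _] _]; rewrite h.
by rewrite addr0.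
Qed.

Lemma bnd_fin (u : nat -> R) N : (forall k, (N <= k)%N -> u k = 0) -> bnd u.
Proof.
move=> h; exists (series (fun k => `|u k|) N) => n.
have hn : (n <= n + N)%N by rewrite leq_addr.
apply: (@le_trans _ _ (series (fun k => `|u k|) (n + N))).
  apply: (@le_trans _ _ (series (fun k => `|u k|) n)).
    by rewrite !seriesE; apply: ler_sum => k _; exact: ler_norm.
  by apply: series_nd.
rewrite (series_fin (N := N)) ?leq_addl // => k hk.
by rewrite h ?normr0.
Qed.

Lemma bnd_shift (u : nat -> R) m : (forall k, 0 <= u k) -> bnd u ->
  bnd (fun j => u (m + j)%N).
Proof.
move=> h [M hM]; exists M => n; apply: le_trans (hM (m + n)%N).
rewrite /series /= (big_cat_nat (leq0n m) (leq_addr n m)) /=.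
have e : \sum_(m <= i < m + n) u i = \sum_(0 <= j < n) u (m + j)%N.
  change (\sum_((0 + m)%N <= i < m + n) u i = \sum_(0 <= j < n) u (m + j)%N).
  by rewrite big_addn addKn; apply: eq_bigr => i _; rewrite addnC.
rewrite e lerDr; apply: sumr_ge0 => i _; exact: h.
Qed.


Lemma l2_bnd (a : nat -> C) : l2 a <-> bnd (fun k => sqn (a k)).
Proof.
split; first by move=> h; apply: cvg_bnd => // k; exact: sqn_ge0.
by move=> h; apply: bnd_cvg => // k; exact: sqn_ge0.
Qed.

Lemma l2_le (a : nat -> C) (b : nat -> C) c : 0 <= c ->
  (forall k, sqn (a k) <= c * sqn (b k)) -> l2 b -> l2 a.
Proof.
move=> hc h /l2_bnd hb; apply/l2_bnd; apply: bnd_le h _.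
exact: bnd_scale.
Qed.

Lemma l2D (a b : nat -> C) : l2 a -> l2 b -> l2 (fun k => a k + b k).
Proof.
move=> /l2_bnd ha /l2_bnd hb; apply/l2_bnd.
apply: (bnd_le (v := fun k => 2 * (sqn (a k) + sqn (b k)))).
  by move=> k; exact: sqnD.
by apply: bnd_scale => //; exact: bnd_add.
Qed.

Lemma l2B (a b : nat -> C) : l2 a -> l2 b -> l2 (fun k => a k - b k).
Proof.
move=> /l2_bnd ha /l2_bnd hb; apply/l2_bnd.
apply: (bnd_le (v := fun k => 2 * (sqn (a k) + sqn (b k)))).
  by move=> k; exact: sqnB.
by apply: bnd_scale => //; exact: bnd_add.
Qed.

Lemma l2_fin (a : nat -> C) N : (forall k, (N <= k)%N -> a k = 0) -> l2 a.
Proof. by move=> h; apply/l2_bnd; apply: (bnd_fin (N := N)) => k hk; rewrite h // sqn0. Qed.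

Lemma l2_shift (a : nat -> C) m : l2 a -> l2 (fun j => a (m + j)%N).
Proof.
by move=> /l2_bnd h; apply/l2_bnd; apply: (bnd_shift (u := fun k => sqn (a k))) => // k;
  exact: sqn_ge0.
Qed.

Lemma l2_conj (a : nat -> C) : l2 a -> l2 (fun k => (a k)^*).
Proof. by apply: (l2_le (c := 1)) => // k; rewrite sqn_conj mul1r. Qed.

Lemma l2_ev (a b : nat -> C) m : (forall k, (m <= k)%N -> a k = b k) -> l2 a -> l2 b.
Proof.
move=> h ha.
have -> : b = (fun k => a k + (b k - a k)) by apply/funext => k; rewrite addrC subrK.
apply: l2D => //; apply: (l2_fin (N := m)) => k hk.
by rewrite h // subrr.
Qed.

Lemma coord_le (a : nat -> C) s : l2 a -> sqn (a s) <= l2norm2 a.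
Proof.
move=> ha; apply: le_trans (le_lim s.+1 _ ha); last by move=> k; exact: sqn_ge0.
rewrite seriesE big_ord_recr /= lerDr; apply: sumr_ge0 => k _; exact: sqn_ge0.
Qed.

Lemma l2norm2_ge0 (a : nat -> C) : l2 a -> 0 <= l2norm2 a.
Proof. by move=> ha; apply: le_trans (coord_le 0 ha); exact: sqn_ge0. Qed.

Lemma l2norm2_le (a : nat -> C) M : l2 a -> (forall n, series (fun k => sqn (a k)) n <= M) ->
  l2norm2 a <= M.
Proof. by move=> ha hM; apply: lim_le. Qed.


Lemma cvg_dom (v w : nat -> R) : (forall k, `|v k| <= w k) -> bnd w -> cvgn (series v).
Proof.
move=> h hw.
have hv k : - `|v k| <= v k /\ v k <= `|v k|.
  by split; [rewrite lerNl; have := ler_norm (- v k); rewrite normrN | exact: ler_norm].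
have hp : cvgn (series (fun k => `|v k| + v k)).
  apply: bnd_cvg; first by move=> k; have := hv k; lra.
  apply: (bnd_le (v := fun k => 2 * w k)); last exact: bnd_scale.
  by move=> k; have := h k; have := hv k; lra.
have hn : cvgn (series (fun k => `|v k|)).
  apply: bnd_cvg => //; apply: bnd_le hw => k; exact: h.
have := is_cvg_seriesB hp hn.
have -> // : ((fun k => `|v k| + v k) - (fun k => `|v k|)) = v.
by apply/funext => k /=; rewrite addrC addKr.
Qed.

Definition absum (u : nat -> C) :=
  bnd (fun k => `|complex.Re (u k)| + `|complex.Im (u k)|).

Lemma absum_Re (u : nat -> C) : absum u -> cvgn (series (fun k => complex.Re (u k))).
Proof.
move=> h; apply: cvg_dom h => k; rewrite lerDl; exact: normr_ge0.
Qed.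

Lemma absum_Im (u : nat -> C) : absum u -> cvgn (series (fun k => complex.Im (u k))).
Proof.
move=> h; apply: cvg_dom h => k; rewrite lerDr; exact: normr_ge0.
Qed.


Lemma csumE (u : nat -> C) a b :
  (series (fun k => complex.Re (u k)) @ \oo --> a)%classic ->
  (series (fun k => complex.Im (u k)) @ \oo --> b)%classic -> csum u = (a +i* b)%C.
Proof.
by move=> ha hb; rewrite /csum (cvg_lim (@Rhausdorff R) ha) (cvg_lim (@Rhausdorff R) hb).
Qed.

Lemma Re_sum (u : nat -> C) N :
  complex.Re (\sum_(k < N) u k) = \sum_(k < N) complex.Re (u k).
Proof.
elim: N => [|N IH]; first by rewrite !big_ord0.
by rewrite !big_ord_recr /= -IH; case: (\sum_(i < N) u i); case: (u N).
Qed.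

Lemma Im_sum (u : nat -> C) N :
  complex.Im (\sum_(k < N) u k) = \sum_(k < N) complex.Im (u k).
Proof.
elim: N => [|N IH]; first by rewrite !big_ord0.
by rewrite !big_ord_recr /= -IH; case: (\sum_(i < N) u i); case: (u N).
Qed.

Lemma csum_fin (u : nat -> C) N : (forall k, (N <= k)%N -> u k = 0) ->
  csum u = \sum_(k < N) u k.
Proof.
move=> h.
rewrite (@csumE u (series (fun k => complex.Re (u k)) N)
                 (series (fun k => complex.Im (u k)) N)).
- by rewrite !seriesE -Re_sum -Im_sum; case: (\sum_(k < N) u k).
- apply: cvg_near_cst; apply: filterS (nbhs_infty_ge N) => n hn.
  by apply: series_fin => // k hk; rewrite h.
- apply: cvg_near_cst; apply: filterS (nbhs_infty_ge N) => n hn.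
  by apply: series_fin => // k hk; rewrite h.
Qed.

Lemma absum_shift (u : nat -> C) : absum u -> absum (fun j => u j.+1).
Proof.
move=> h; apply: (bnd_shift 1) (h) => k.
by apply: addr_ge0; exact: normr_ge0.
Qed.

Lemma csum_shift (u : nat -> C) : absum u -> csum u = u 0%N + csum (fun j => u j.+1).
Proof.
move=> h; have hS := absum_shift h.
rewrite (@csumE u (complex.Re (u 0%N) + limn (series (fun k => complex.Re (u k.+1))))
                  (complex.Im (u 0%N) + limn (series (fun k => complex.Im (u k.+1))))).
- by rewrite /csum; case: (u 0%N).
- rewrite -cvg_shiftS.
  have -> : [sequence series (fun k => complex.Re (u k)) n.+1]_n =
            (fun=> complex.Re (u 0%N)) + series (fun k => complex.Re (u k.+1)).
    apply/funext => n /=.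
    change (series (fun k => complex.Re (u k)) n.+1 =
      complex.Re (u 0%N) + series (fun k => complex.Re (u k.+1)) n).
    by rewrite !seriesE big_ord_recl.
  exact: cvgD (cvg_cst _) (absum_Re hS).
- rewrite -cvg_shiftS.
  have -> : [sequence series (fun k => complex.Im (u k)) n.+1]_n =
            (fun=> complex.Im (u 0%N)) + series (fun k => complex.Im (u k.+1)).
    apply/funext => n /=.
    change (series (fun k => complex.Im (u k)) n.+1 =
      complex.Im (u 0%N) + series (fun k => complex.Im (u k.+1)) n).
    by rewrite !seriesE big_ord_recl.
  exact: cvgD (cvg_cst _) (absum_Im hS).
Qed.

Lemma csum_sub (u v : nat -> C) : absum u -> absum v ->
  csum (fun k => u k - v k) = csum u - csum v.
Proof.
move=> hu hv.
rewrite (@csumE _ (limn (series (fun k => complex.Re (u k))) - limn (series (fun k => complex.Re (v k))))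
                  (limn (series (fun k => complex.Im (u k))) - limn (series (fun k => complex.Im (v k))))).
- by rewrite /csum.
- have -> : series (fun k => complex.Re (u k - v k)) =
            series (fun k => complex.Re (u k)) - series (fun k => complex.Re (v k)).
    apply/funext => n /=.
    change (series (fun k => complex.Re (u k - v k)) n =
      series (fun k => complex.Re (u k)) n - series (fun k => complex.Re (v k)) n).
    rewrite !seriesE -sumrB; apply: eq_bigr => k _.
    by case: (u k); case: (v k).
  exact: cvgB (absum_Re hu) (absum_Re hv).
- have -> : series (fun k => complex.Im (u k - v k)) =
            series (fun k => complex.Im (u k)) - series (fun k => complex.Im (v k)).
    apply/funext => n /=.
    change (series (fun k => complex.Im (u k - v k)) n =
      series (fun k => complex.Im (u k)) n - series (fun k => complex.Im (v k)) n).
    rewrite !seriesE -sumrB; apply: eq_bigr => k _.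
    by case: (u k); case: (v k).
  exact: cvgB (absum_Im hu) (absum_Im hv).
Qed.


Lemma absum_l2 (a b : nat -> C) : l2 a -> l2 b -> absum (fun k => a k * b k).
Proof.
move=> /l2_bnd ha /l2_bnd hb.
apply: (bnd_le (v := fun k => sqn (a k) + sqn (b k))); last exact: bnd_add.
move=> k; have := Re_prod_bound (a k) (b k) ltr01.
have := Im_prod_bound (a k) (b k) ltr01.
rewrite expr1n mul1r mulr1; lra.
Qed.

Lemma ip_absum (a b : nat -> C) : l2 a -> l2 b -> absum (fun k => a k * (b k)^*).
Proof. by move=> ha hb; apply: absum_l2 => //; exact: l2_conj. Qed.

Lemma ip_sub (a a' b : nat -> C) : l2 a -> l2 a' -> l2 b ->
  ip (fun k => a k - a' k) b = ip a b - ip a' b.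
Proof.
move=> ha ha' hb; rewrite /ip -csum_sub; try exact: ip_absum.
by congr csum; apply/funext => k; rewrite mulrBl.
Qed.

Lemma ip_fin (a b : nat -> C) N : (forall k, (N <= k)%N -> a k = 0) ->
  ip a b = \sum_(k < N) a k * (b k)^*.
Proof. by move=> h; rewrite /ip (csum_fin (N := N)) // => k hk; rewrite h ?mul0r. Qed.

Lemma lim_abs_le (s : nat -> R) M : cvgn s -> (forall n, `|s n| <= M) -> `|limn s| <= M.
Proof.
move=> hc h; rewrite ler_norml; apply/andP; split.
  by apply: lim_ge => // n; have := h n; rewrite ler_norml => /andP [].
by apply: lim_le => // n; have := h n; rewrite ler_norml => /andP [].
Qed.

Lemma ip_bound (a b : nat -> C) e : l2 a -> l2 b -> 0 < e ->
  2 * e * `|complex.Re (ip a b)| <= l2norm2 a + e ^+ 2 * l2norm2 b /\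
  2 * e * `|complex.Im (ip a b)| <= l2norm2 a + e ^+ 2 * l2norm2 b.
Proof.
move=> ha hb he.
have hab := ip_absum ha hb.
set K := l2norm2 a + e ^+ 2 * l2norm2 b.
have h2e : 0 < 2 * e by rewrite mulr_gt0.
have hser n : series (fun k => sqn (a k)) n + e ^+ 2 * series (fun k => sqn (b k)) n <= K.
  apply: lerD; first by apply: le_lim => // k; exact: sqn_ge0.
  by rewrite ler_pM2l ?exprn_gt0 //; apply: le_lim => // k; exact: sqn_ge0.
have key (f : C -> R) : (forall z w, 2 * e * `|f (z * w)| <= sqn z + e ^+ 2 * sqn w) ->
  forall n, `|series (fun k => f (a k * (b k)^*)) n| <= K / (2 * e).
  move=> hf n; rewrite ler_pdivlMr // mulrC.
  apply: le_trans (hser n).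
  rewrite !seriesE [X in _ <= _ + X]mulr_sumr -big_split /=.
  apply: le_trans; first by apply: ler_wpM2l; [exact: ltW | exact: ler_norm_sum].
  rewrite mulr_sumr; apply: ler_sum => k _.
  by have := hf (a k) ((b k)^*); rewrite sqn_conj.
split.
- have := lim_abs_le (absum_Re hab) (key (@complex.Re R) (fun z w => Re_prod_bound z w he)).
  by rewrite ler_pdivlMr // mulrC.
- have := lim_abs_le (absum_Im hab) (key (@complex.Im R) (fun z w => Im_prod_bound z w he)).
  by rewrite ler_pdivlMr // mulrC.
Qed.


Lemma ip_small (v : nat -> C) (eta : R) : l2 v -> 0 < eta ->
  exists2 delta : R, 0 < delta & forall w, l2 w -> l2norm2 w <= delta ->
    sqn (ip w v) <= eta.
Proof.
move=> hv heta.
set Y := l2norm2 v; have hY : 0 <= Y by exact: l2norm2_ge0.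
set t := eta / (eta + 2).
have ht : 0 < t by rewrite divr_gt0 // addr_gt0.
have ht1 : t <= 1 by rewrite ler_pdivrMr ?addr_gt0 // mul1r lerDl.
have ht2 : t * 2 <= eta.
  rewrite -ler_pdivlMr // ler_pdivrMr ?addr_gt0 //.
  rewrite -subr_ge0 mulrDr; have : 0 <= eta * eta by rewrite mulr_ge0 // ltW.
  by move=> h; rewrite [_ * (_ + _)]mulrDr; lra.
set e := t / (Y + 1).
have hY1 : 0 < Y + 1 by rewrite ltr_pwDr.
have he : 0 < e by rewrite divr_gt0.
have heY : e * Y <= t.
  rewrite /e mulrAC ler_pdivrMr // ler_pM2l //; lra.
exists (e * t); first by rewrite mulr_gt0.
move=> w hw hX.
have [hRe hIm] := ip_bound hw hv he.
have hbx (x : R) : 2 * e * `|x| <= l2norm2 w + e ^+ 2 * Y -> `|x| <= t.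
  move=> hx.
  have : 2 * e * `|x| <= e * (t + e * Y).
    by apply: le_trans hx _; rewrite mulrDr mulrA -expr2 lerD2r.
  rewrite mulrAC [X in X <= _]mulrC ler_pM2l // => h2; lra.
have h1 := hbx _ hRe; have h2 := hbx _ hIm.
rewrite /sqn.
have hr : complex.Re (ip w v) ^+ 2 <= t ^+ 2.
  by move: h1; rewrite ler_norml => /andP [? ?]; nra.
have hi : complex.Im (ip w v) ^+ 2 <= t ^+ 2.
  by move: h2; rewrite ler_norml => /andP [? ?]; nra.
have : t ^+ 2 * 2 <= eta.
  apply: le_trans ht2; rewrite expr2 -mulrA ler_piMl //.
  by rewrite mulr_ge0 // ltW.
lra.
Qed.


Lemma absum_shiftn (u : nat -> C) m : absum u -> absum (fun j => u (m + j)%N).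
Proof.
move=> h; apply: (bnd_shift m) (h) => k.
by apply: addr_ge0; exact: normr_ge0.
Qed.

Lemma csum_shiftn (u : nat -> C) m : absum u ->
  csum u = \sum_(k < m) u k + csum (fun j => u (m + j)%N).
Proof.
move=> h; elim: m => [|m IH]; first by rewrite big_ord0 add0r.
rewrite IH (csum_shift (absum_shiftn m h)) big_ord_recr /= addn0 addrA.
by congr (_ + csum _); apply/funext => j; rewrite addnS addSn.
Qed.


Lemma sqnN (z : C) : sqn (- z) = sqn z.
Proof. by case: z => a b; rewrite /sqn /= !sqrrN. Qed.

Lemma ev_le (f : nat -> R) (delta : R) : (f @ \oo --> (0 : R))%classic -> 0 < delta ->
  (\forall n \near \oo, f n <= delta)%classic.
Proof.
move=> /cvgrPdist_le /(_ delta) H hd; apply: filterS (H hd) => n.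
by rewrite sub0r normrN => h; exact: le_trans (ler_norm _) h.
Qed.


Lemma series_split (u : nat -> R) m n :
  series u (m + n)%N = series u m + series (fun j => u (m + j)%N) n.
Proof.
rewrite /series /= (big_cat_nat (leq0n m) (leq_addr n m)) /=.
have e : \sum_(m <= i < m + n) u i = \sum_(0 <= j < n) u (m + j)%N.
  change (\sum_((0 + m)%N <= i < m + n) u i = \sum_(0 <= j < n) u (m + j)%N).
  by rewrite big_addn addKn; apply: eq_bigr => i _; rewrite addnC.
by rewrite e.
Qed.

Lemma harmonic_ge0 k : 0 <= harmonic k :> R.
Proof. by rewrite /harmonic /= invr_ge0 ler0n. Qed.

Lemma sub_choice (w : nat -> R) : (forall k, 0 <= w k) -> bnd w ->
  forall n, exists N, (n <= N)%N /\ (N.+1)%:R * w N.+1 <= (n.+1)%:R^-1.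
Proof.
move=> h0 hb n.
case: (pselect (exists N, (n <= N)%N /\ (N.+1)%:R * w N.+1 <= (n.+1)%:R^-1)) => // hno.
exfalso; apply: (@dvg_harmonic R).
have H N : (n <= N)%N -> (n.+1)%:R^-1 < N.+1%:R * w N.+1.
  by move=> hN; rewrite ltNge; apply/negP => hle; apply: hno; exists N.
have hh j : harmonic (n + j)%N <= n.+1%:R * w (n.+1 + j)%N.
  have := H (n + j)%N (leq_addr j n).
  set K := ((n + j).+1)%:R; set a := (n.+1)%:R.
  have hK : 0 < K by rewrite ltr0n.
  have ha : 0 < a by rewrite ltr0n.
  rewrite /harmonic /= -/K -[a^-1]div1r -[K^-1]div1r ltr_pdivrMr // ler_pdivrMr //.
  set x := w _.
  by move=> h1; apply: ltW; rewrite (_ : a * x * K = K * x * a) //; ring.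
have hbs : bnd (fun j => harmonic (n + j)%N).
  apply: (bnd_le (v := fun j => n.+1%:R * w (n.+1 + j)%N)) => //.
  apply: bnd_scale; first exact: ler0n.
  exact: (bnd_shift n.+1 h0 hb).
apply: bnd_cvg; first exact: harmonic_ge0.
have [M hM] := hbs.
exists (series harmonic n + M) => m.
apply: le_trans (series_nd harmonic_ge0 (leq_addl n m)) _.
by rewrite series_split lerD2l.
Qed.

End Ana.


Section Alg.
Variable R : realType.
Local Notation C := R[i].

Lemma gbinom0 (x : R) : gbinom x 0 = 1.
Proof. by rewrite /gbinom big_ord0 fact0 divr1. Qed.

Lemma gbinomS (x : R) (m : nat) :
  gbinom (x + 1) m.+1 = gbinom x m.+1 + gbinom x m.
Proof.
rewrite /gbinom big_ord_recl big_ord_recr /=.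
have -> : \prod_(i < m) (x + 1 - (lift ord0 i)%:R) = \prod_(i < m) (x - i%:R).
  by apply: eq_bigr => i _; rewrite /= mulrS; ring.
set P := \prod_(i < m) (x - i%:R).
rewrite factS natrM.
have hf : (m`!)%:R != 0 :> R by rewrite pnatr_eq0 -lt0n fact_gt0.
have hm : (m.+1)%:R != 0 :> R by rewrite pnatr_eq0.
rewrite subr0; field; by rewrite hf -mulrS.
Qed.

Lemma laguerre_rec (alpha : R) (n : nat) :
  laguerre alpha n = laguerre (alpha + 1) n -
    (if n is n'.+1 then laguerre (alpha + 1) n' else 0).
Proof.
apply/polyP => k; rewrite coefB /laguerre.
case: n => [|n].
  by rewrite coef0 subr0 !coef_poly; case: k => [|k] //=; rewrite !gbinom0.
rewrite !coef_poly.
have [hk|hk] := ltnP k n.+1.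
  have -> : (k < n.+2)%N by rewrite ltnS ltnW.
  have -> : (n.+1 - k)%N = (n - k).+1 by rewrite subSn.
  rewrite -rmorphB /= -mulrBr; congr (_ %:C)%C; congr (_ * _).
  have -> : n.+1%:R + (alpha + 1) = (n.+1%:R + alpha) + 1 by ring.
  have -> : n%:R + (alpha + 1) = n.+1%:R + alpha by rewrite mulrS; ring.
  by rewrite gbinomS addrK.
rewrite subr0.
case: ltnP => hk2 //.
have -> : k = n.+1 by apply/eqP; rewrite eqn_leq hk -ltnS hk2.
by rewrite subnn !gbinom0.
Qed.


Definition tsum (c : nat -> R[i]) (N k : nat) : R[i] :=
  \sum_(m < N) (k <= m)%:R * c m.

Lemma tsumE (c : nat -> R[i]) N k : (k <= N)%N ->
  tsum c N k = \sum_(k <= m < N) c m.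
Proof.
move=> hk; rewrite /tsum -(big_mkord xpredT (fun m => (k <= m)%:R * c m)).
rewrite (big_cat_nat (leq0n k) hk) /= big_nat_cond big1 ?add0r.
  by apply: eq_big_nat => m /andP [hm _]; rewrite hm mul1r.
by move=> m /andP [/andP [_ hm] _]; rewrite leqNgt hm mul0r.
Qed.

Lemma tsum_ge (c : nat -> R[i]) N k : (N <= k)%N -> tsum c N k = 0.
Proof.
move=> hk; rewrite /tsum big1 // => m _.
by rewrite leqNgt (leq_trans (ltn_ord m) hk) mul0r.
Qed.

Lemma tsum_tele (a : nat -> R[i]) N k : (k <= N)%N ->
  tsum (fun m => a m - a m.+1) N k = a k - a N.
Proof.
move=> hk; rewrite tsumE //.
rewrite -[a k - a N]opprB -(telescope_sumr a hk) -sumrN.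
by apply: eq_bigr => i _; rewrite opprB.
Qed.

Definition prevw (w : nat -> R[i]) (m : nat) : R[i] :=
  if m is m'.+1 then w m' else 0.

Lemma sum_by_parts (w a : nat -> R[i]) N :
  \sum_(m < N) w m * (a m - a m.+1) =
  \sum_(m < N) a m * (w m - prevw w m) - prevw w N * a N.
Proof.
elim: N => [|N IH]; first by rewrite !big_ord0 /= mul0r subr0.
rewrite !big_ord_recr /= IH /=.
case: N IH => [|N] IH /=; ring.
Qed.

End Alg.

Section Op.
Variable R : realType.
Local Notation C := R[i].
Variables (alpha : R) (d : nat -> C) (T : {linear {poly C} -> {poly C}}).
Hypothesis HT : forall n, T (laguerre (alpha + 1) n) = d n *: laguerre (alpha + 1) n.
Local Notation p := (laguerre (alpha + 1)).
Local Notation q := (laguerre alpha).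

Lemma p_sum n : p n = \sum_(t < n.+1) q t.
Proof.
elim: n => [|n IH]; first by rewrite big_ord1 (@laguerre_rec _ alpha 0) subr0.
by rewrite big_ord_recr /= -IH (@laguerre_rec _ alpha n.+1) addrC subrK.
Qed.

Lemma combo_tsum c N : combo q (tsum c N) N = \sum_(m < N) c m *: p m.
Proof.
rewrite /combo /tsum.
under eq_bigr do rewrite scaler_suml.
rewrite exchange_big /=; apply: eq_bigr => m _.
rewrite p_sum scaler_sumr (big_ord_widen N (fun t => c m *: q t) (ltn_ord m)).
rewrite [RHS]big_mkcond /=; apply: eq_bigr => k _.
by rewrite ltnS; case: (_ <= _)%N; rewrite ?mul1r ?mul0r ?scale0r.
Qed.

Lemma T_tsum c N :
  T (combo q (tsum c N) N) = combo q (tsum (fun m => d m * c m) N) N.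
Proof.
rewrite !combo_tsum linear_sum; apply: eq_bigr => m _.
by rewrite linearZ /= HT scalerA mulrC.
Qed.

Lemma q_coef_self n : (q n)`_n != 0.
Proof.
rewrite /laguerre coef_poly ltnSn subnn gbinom0 mulr1.
rewrite (inj_eq (@complexI R)) mulf_neq0 // ?invr_eq0 ?pnatr_eq0 -?lt0n ?fact_gt0 // expf_neq0 // oppr_eq0 oner_eq0.
Qed.

Lemma q_coef_high n k : (n < k)%N -> (q n)`_k = 0.
Proof. by move=> h; rewrite /laguerre coef_poly ltnNge h. Qed.

Lemma combo_eq0 c N : combo q c N = 0 -> forall k, (k < N)%N -> c k = 0.
Proof.
elim: N => [|N IH] h k hk //.
rewrite /combo big_ord_recr /= in h.
have hcN : c N = 0.
  have := congr1 (fun P : {poly C} => P`_N) h.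
  rewrite coef0 coefD coefZ coef_sum big1 ?add0r.
    by move/eqP; rewrite mulf_eq0 (negbTE (q_coef_self N)) orbF => /eqP.
  by move=> i _; rewrite coefZ q_coef_high ?mulr0.
move: hk; rewrite ltnS leq_eqVlt => /orP [/eqP -> //|hk].
by apply: IH => //; rewrite -h hcN scale0r addr0.
Qed.

Lemma combo_inj b b' N : combo q b N = combo q b' N ->
  forall k, (k < N)%N -> b k = b' k.
Proof.
move=> h k hk; apply/eqP; rewrite -subr_eq0; apply/eqP.
apply: (@combo_eq0 (fun k => b k - b' k) N) => //.
by rewrite /combo -[RHS](subrr (combo q b N)) {2}h /combo -sumrB;
   apply: eq_bigr => i _; rewrite scalerBl.
Qed.

Definition bsq (a : nat -> C) (N : nat) : nat -> C :=
  tsum (fun m => d m * (a m - a m.+1)) N.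

Lemma combo_ext a a' N : (forall k, (k < N)%N -> a k = a' k) ->
  combo q a N = combo q a' N.
Proof. by move=> h; apply: eq_bigr => i _; rewrite h. Qed.

Lemma a_tsum a N : (forall k, (N <= k)%N -> a k = 0) ->
  combo q a N = combo q (tsum (fun m => a m - a m.+1) N) N.
Proof.
move=> h; apply: combo_ext => k hk.
by rewrite tsum_tele ?(ltnW hk) // (h N) // subr0.
Qed.

Lemma opgraph_char a b : opgraph q T a b ->
  exists N, (forall k, (N <= k)%N -> a k = 0) /\ b = bsq a N.
Proof.
move=> [N [hN heq]]; exists N; split; first by move=> k /hN [].
apply/funext => k.
have [hk|hk] := ltnP k N.
  apply: (combo_inj _ hk).
  by rewrite -heq (a_tsum (fun k h => (hN k h).1)) T_tsum.
by rewrite /bsq tsum_ge // (hN k hk).2.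
Qed.

Lemma opgraph_mk a N : (forall k, (N <= k)%N -> a k = 0) ->
  opgraph q T a (bsq a N).
Proof.
move=> h; exists N; split.
  by move=> k hk; rewrite h // /bsq tsum_ge.
by rewrite (a_tsum h) T_tsum.
Qed.

End Op.


Section Main.
Variable R : realType.
Local Notation C := R[i].
Variables (alpha : R) (d : nat -> C) (T : {linear {poly C} -> {poly C}}).
Hypothesis HT : forall n, T (laguerre (alpha + 1) n) = d n *: laguerre (alpha + 1) n.
Local Notation p := (laguerre (alpha + 1)).
Local Notation q := (laguerre alpha).

Definition Mg (g : nat -> C) (k : nat) : C :=
  g k * (d k)^* + ((d k)^* - (prevseq d k)^*) * \sum_(t < k) g t.

Lemma sum_delta (x : nat -> C) (s M : nat) :
  \sum_(k < M) x k * ((k : nat) == s)%:R = (s < M)%:R * x s.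
Proof.
elim: M => [|M IH]; first by rewrite big_ord0 mul0r.
rewrite big_ord_recr /= IH.
case: (eqVneq M s) => [->|hM] /=.
  by rewrite ltnn ltnSn mul0r add0r mul1r mulr1.
have hM2 : (s == M) = false by rewrite eq_sym; exact: negbTE.
by rewrite [in RHS]ltnS [in RHS]leq_eqVlt hM2 /= mulr0 addr0.
Qed.

Lemma sum_ind_le (x : nat -> C) m N : (m < N)%N ->
  \sum_(k < N) (k <= m)%:R * x k = \sum_(k < m.+1) x k.
Proof.
move=> hm; rewrite (big_ord_widen N x hm) [RHS]big_mkcond /=; apply: eq_bigr => k _.
by rewrite ltnS; case: (_ <= _)%N; rewrite ?mul1r ?mul0r.
Qed.

Lemma Mg_conj (g : nat -> C) m :
  (Mg g m)^* = prevw (fun m => d m * (\sum_(k < m.+1) g k)^*) m.+1 -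
               prevw (fun m => d m * (\sum_(k < m.+1) g k)^*) m.
Proof.
rewrite /Mg /prevw /prevseq; case: m => [|m].
  by rewrite big_ord0 big_ord1 !rmorphD !rmorphM !rmorphB /= conjCK !rmorph0; ring.
rewrite [in RHS]big_ord_recr /= !rmorphD !rmorphM !rmorphB /= !conjCK; ring.
Qed.

Lemma ip_bseq (a g : nat -> C) N : (forall k, (N <= k)%N -> a k = 0) ->
  ip (bsq d a N) g = \sum_(m < N) a m * (Mg g m)^*.
Proof.
move=> ha.
rewrite (@ip_fin _ _ _ N); last by move=> k hk; rewrite /bsq tsum_ge.
rewrite /bsq /tsum.
under eq_bigr do rewrite mulr_suml.
rewrite exchange_big /=.
set w := fun m => d m * (\sum_(k < m.+1) g k)^*.
have -> : \sum_(j < N) \sum_(i < N) (i <= j)%:R * (d j * (a j - a j.+1)) * (g i)^* =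
          \sum_(m < N) w m * (a m - a m.+1).
  apply: eq_bigr => m _.
  rewrite /w rmorph_sum /= -(sum_ind_le (fun k => (g k)^*) (ltn_ord m)) mulr_sumr mulr_suml.
  by apply: eq_bigr => k _; ring.
rewrite sum_by_parts (ha N) // mulr0 subr0.
by apply: eq_bigr => m _; rewrite Mg_conj.
Qed.

Lemma adj_formula (g h : nat -> C) : adj_rel q T g h -> h = Mg g.
Proof.
move=> [hg [hh hadj]]; apply/funext => s.
set a := fun k : nat => (k == s)%:R : C.
have ha : forall k, (s.+1 <= k)%N -> a k = 0.
  by move=> k hk; rewrite /a; case: eqP => // e; move: hk; rewrite e ltnn.
have := hadj _ _ (opgraph_mk HT ha).
rewrite ip_bseq // (@ip_fin _ _ _ s.+1) // /a.
under eq_bigr do rewrite mulrC.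
under [in RHS]eq_bigr do rewrite mulrC.
rewrite (sum_delta (fun k => (Mg g k)^*)) (sum_delta (fun k => (h k)^*)) ltnSn !mul1r.
by move/(can_inj conjCK).
Qed.

Lemma part_i (g : nat -> C) : l2 g ->
  (adj_dom q T g <-> l2 (Mg g)).
Proof.
move=> hg; split.
  by move=> [h H]; rewrite -(adj_formula H); case: H => _ [].
move=> hM; exists (Mg g); split => //; split => // a b hab.
have [N [ha ->]] := opgraph_char HT hab.
by rewrite ip_bseq // (@ip_fin _ _ _ N).
Qed.


Definition es (s : nat) : nat -> C := fun k => (k == s)%:R.
Definition dc (k : nat) : C := (d k)^* - (prevseq d k)^*.

Lemma sum_es (s k : nat) : \sum_(t < k) es s t = (s < k)%:R.
Proof.
rewrite -[RHS]mulr1 -(sum_delta (fun=> 1)); apply: eq_bigr => t _.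
by rewrite mul1r.
Qed.

Lemma Mg_es s k : Mg (es s) k = (k == s)%:R * (d k)^* + (s < k)%:R * dc k.
Proof. by rewrite /Mg sum_es /dc /es; congr (_ + _); rewrite mulrC. Qed.

Lemma l2_es s : l2 (es s).
Proof.
apply: (l2_fin (N := s.+1)) => k hk; rewrite /es.
by case: eqP => // e; move: hk; rewrite e ltnn.
Qed.

Lemma Mg_es_tail s k : (s < k)%N -> Mg (es s) k = dc k.
Proof.
move=> hk; rewrite Mg_es hk.
have -> : (k == s) = false by apply/negbTE; rewrite neq_ltn hk orbT.
by rewrite mul0r add0r mul1r.
Qed.

Lemma part_iii s : adj_dom q T (es s) <-> l2 dc.
Proof.
rewrite (part_i (@l2_es s)); split.
  by apply: (l2_ev (m := s.+1)) => k hk; rewrite Mg_es_tail.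
by apply: (l2_ev (m := s.+1)) => k hk; rewrite Mg_es_tail.
Qed.

Definition Sg (g : nat -> C) (s : nat) : C :=
  g s * d s + csum (fun j => (d (s + 1 + j)%N - d (s + j)%N) * g (s + 1 + j)%N).

Lemma l2_Mg_es s : l2 dc -> l2 (Mg (es s)).
Proof. by apply: (l2_ev (m := s.+1)) => k hk; rewrite Mg_es_tail. Qed.

Lemma Sg_ip (g : nat -> C) s : l2 g -> l2 dc -> Sg g s = ip g (Mg (es s)).
Proof.
move=> hg hd.
rewrite /ip (csum_shiftn s.+1 (ip_absum hg (@l2_Mg_es s hd))) /Sg.
congr (_ + _).
  rewrite big_ord_recr /= big1 ?add0r.
    by rewrite Mg_es eqxx ltnn mul0r addr0 mul1r conjCK.
  move=> k _; rewrite Mg_es.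
  have -> : ((k : nat) == s) = false by apply/negbTE; rewrite neq_ltn ltn_ord.
  by rewrite ltnNge ltnW //= mul0r mul0r add0r rmorph0 mulr0.
congr csum; apply/funext => j.
rewrite Mg_es_tail; last by rewrite addSn ltnS leq_addr.
rewrite /dc rmorphB /= !conjCK addn1 addSn /= mulrC.
by [].
Qed.


Lemma ip_es (b : nat -> C) s N : (forall k, (N <= k)%N -> b k = 0) ->
  ip b (es s) = b s.
Proof.
move=> hb; rewrite (@ip_fin _ _ _ (N + s.+1)); last first.
  by move=> k hk; apply: hb; apply: leq_trans hk; exact: leq_addr.
rewrite (eq_bigr (fun k : 'I_(N + s.+1) => b k * ((k : nat) == s)%:R)).
  by rewrite sum_delta (ltn_addl N (ltnSn s)) mul1r.
by move=> k _; rewrite /es rmorph_nat.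
Qed.

Lemma clos_formula (g h : nat -> C) : l2 dc -> clos_rel q T g h -> h = Sg g.
Proof.
move=> hd [hg [hh [A [B [hAB [hA hB]]]]]]; apply/funext => s.
set z := h s - Sg g s.
suff H : forall eta : R, 0 < eta -> sqn z <= eta.
  apply/eqP; rewrite -subr_eq0; apply/eqP; apply: sqn_eq0.
  have [hz|hz] := lerP (sqn z) 0; first by apply/eqP; rewrite eq_le hz sqn_ge0.
  by have := H (sqn z / 2); rewrite divr_gt0 // => /(_ isT); lra.
move=> eta heta.
set v := Mg (es s); have hv : l2 v := @l2_Mg_es s hd.
have he4 : 0 < eta / 4 by rewrite divr_gt0.
have [delta hdel hsmall] := ip_small hv he4.
have hevA := ev_le hA hdel; have hevB := ev_le hB he4.
have [n [hn1 hn2]] := filter_ex (filterI hevA hevB).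
have [N [haN hb]] := opgraph_char HT (hAB n).
have hAn : l2 (A n) := l2_fin haN.
have hBN : forall k, (N <= k)%N -> B n k = 0 by move=> k hk; rewrite hb /bsq tsum_ge.
have hBn : l2 (B n) := l2_fin hBN.
have eB : B n s = ip (A n) v.
  rewrite -(ip_es s hBN) hb ip_bseq //.
  by rewrite (@ip_fin _ _ _ N).
have ez : z = (h s - B n s) + ip (fun k => A n k - g k) v.
  by rewrite ip_sub // eB /z Sg_ip //; ring.
rewrite ez; apply: le_trans (sqnD _ _) _.
have h1 : sqn (h s - B n s) <= eta / 4.
  rewrite -opprB sqnN; apply: le_trans hn2.
  exact: (coord_le s (l2B hBn hh)).
have h2 : sqn (ip (fun k => A n k - g k) v) <= eta / 4.
  by apply: hsmall => //; exact: l2B.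
lra.
Qed.


Lemma l2_delta : l2 dc -> l2 (fun k => d k - prevseq d k).
Proof.
move=> h; have := l2_conj h.
have -> // : (fun k => (dc k)^*) = (fun k => d k - prevseq d k).
by apply/funext => k; rewrite /dc rmorphB /= !conjCK.
Qed.

Lemma Sg_step (g : nat -> C) m : l2 g -> l2 dc ->
  Sg g m - Sg g m.+1 = d m * (g m - g m.+1).
Proof.
move=> hg hd.
have hdl : l2 (fun j => d (m + 1 + j)%N - d (m + j)%N).
  have := l2_shift (m := (m + 1)%N) (l2_delta hd).
  have -> // : (fun j => d (m + 1 + j)%N - prevseq d (m + 1 + j)%N) =
               (fun j => d (m + 1 + j)%N - d (m + j)%N).
  by apply/funext => j; rewrite [in prevseq _ _]addn1 addSn.
have hab := absum_l2 hdl (l2_shift (m := (m + 1)%N) hg).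
rewrite /Sg (csum_shift hab) !addn0.
have -> : (fun j => (d (m + 1 + j.+1)%N - d (m + j.+1)%N) * g (m + 1 + j.+1)%N) =
          (fun j => (d (m.+1 + 1 + j)%N - d (m.+1 + j)%N) * g (m.+1 + 1 + j)%N).
  by apply/funext => j; rewrite !addn1 !addnS !addSn.
rewrite !addn1; ring.
Qed.

Definition trunc (f : nat -> C) (N k : nat) : C :=
  if (k <= N)%N then f k - f N.+1 else 0.

Lemma trunc_vanish f N k : (N.+1 <= k)%N -> trunc f N k = 0.
Proof. by move=> hk; rewrite /trunc leqNgt hk. Qed.

Lemma bsq_trunc (f F : nat -> C) N :
  (forall m, F m - F m.+1 = d m * (f m - f m.+1)) ->
  bsq d (trunc f N) N.+1 = trunc F N.
Proof.
move=> hF; apply/funext => k; rewrite /bsq.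
have [hk|hk] := leqP k N; last by rewrite tsum_ge // trunc_vanish.
have -> : tsum (fun m => d m * (trunc f N m - trunc f N m.+1)) N.+1 k =
          tsum (fun m => F m - F m.+1) N.+1 k.
  apply: eq_bigr => m _; congr (_ * _); rewrite hF /trunc.
  have hm : (m <= N)%N by rewrite -ltnS ltn_ord.
  rewrite hm; case: (leqP m.+1 N) => h2.
    by congr (_ * _); ring.
  have -> : (m : nat) = N by apply/eqP; rewrite eqn_leq hm -ltnS.
  by rewrite subr0.
by rewrite tsum_tele ?(leqW hk) // /trunc hk.
Qed.

Lemma trunc_norm (f : nat -> C) N : l2 f ->
  l2norm2 (fun k => trunc f N k - f k) <=
  (N.+1)%:R * sqn (f N.+1) + (l2norm2 f - series (fun k => sqn (f k)) N.+1).
Proof.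
move=> hf.
have hl : l2 (fun k => trunc f N k - f k).
  by apply: l2B => //; apply: (l2_fin (N := N.+1)) => k hk; rewrite trunc_vanish.
apply: l2norm2_le => // n.
set w := fun k => sqn (trunc f N k - f k).
have hw0 k : 0 <= w k by exact: sqn_ge0.
have hwl k : (k <= N)%N -> w k = sqn (f N.+1).
  by move=> hk; rewrite /w /trunc hk (_ : f k - f N.+1 - f k = - f N.+1) ?sqnN //; ring.
have hwr k : (N < k)%N -> w k = sqn (f k).
  by move=> hk; rewrite /w /trunc leqNgt hk /= sub0r sqnN.
apply: le_trans (series_nd hw0 (leq_addl N.+1 n)) _.
rewrite series_split; apply: lerD.
  rewrite seriesE (eq_bigr (fun=> sqn (f N.+1))); last by move=> k _; rewrite hwl // -ltnS.
  by rewrite sumr_const card_ord mulr_natl.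
have hser := le_lim (N.+1 + n)%N (fun k => sqn_ge0 (f k)) hf.
rewrite series_split in hser.
rewrite lerBrDl; apply: le_trans hser; rewrite lerD2l le_eqVlt; apply/orP; left.
apply/eqP; rewrite !seriesE; apply: eq_bigr => j _; rewrite hwr //.
by rewrite addSn ltnS leq_addr.
Qed.


Lemma trunc_cvg (f : nat -> C) (Nf : nat -> nat) : l2 f ->
  (forall n, (n <= Nf n)%N) ->
  (forall n, (Nf n).+1%:R * sqn (f (Nf n).+1) <= (n.+1)%:R^-1) ->
  ((fun n => l2norm2 (fun k => trunc f (Nf n) k - f k)) @ \oo --> (0 : R))%classic.
Proof.
move=> hf hN hsm.
set L := l2norm2 f.
have hb : ((harmonic + ((fun=> L) - series (fun k => sqn (f k)))) @ \oo --> (0:R))%classic.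
  have -> : (0 : R) = 0 + (L - L) by rewrite subrr addr0.
  exact: cvgD (@cvg_harmonic R) (cvgB (cvg_cst L) hf).
apply: (squeeze_cvgr _ (cvg_cst (0 : R)) hb).
apply: nearW => n; rewrite !fctE; apply/andP; split.
  apply: l2norm2_ge0; apply: l2B => //.
  by apply: (l2_fin (N := (Nf n).+1)) => k hk; rewrite trunc_vanish.
apply: le_trans (trunc_norm (Nf n) hf) _.
apply: lerD; first by rewrite /harmonic /=; exact: hsm.
rewrite lerD2l lerN2; apply: series_nd; first by move=> k; exact: sqn_ge0.
exact: leqW.
Qed.

Lemma part_iv_a (g : nat -> C) : l2 dc -> l2 g ->
  (clos_dom q T g <-> l2 (Sg g)).
Proof.
move=> hd hg; split.
  by move=> [h H]; rewrite -(clos_formula hd H); case: H => _ [].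
move=> hS; exists (Sg g); split => //; split => //.
set W := fun k => sqn (g k) + sqn (Sg g k).
have hW0 k : 0 <= W k by rewrite /W addr_ge0 // sqn_ge0.
have hWb : bnd W by apply: bnd_add; apply/l2_bnd.
have [Nf hNf] := choice (sub_choice hW0 hWb).
exists (fun n => trunc g (Nf n)), (fun n => trunc (Sg g) (Nf n)); split.
  move=> n /=; rewrite -(bsq_trunc (Nf n) (fun m => Sg_step m hg hd)).
  by apply: (opgraph_mk HT (a := trunc g (Nf n)) (N := (Nf n).+1)) => k hk; rewrite trunc_vanish.
split; apply: trunc_cvg => // n; have [h1 h2] := hNf n => //;
  apply: le_trans h2; rewrite ler_wpM2l // /W.
  by rewrite lerDl sqn_ge0.
by rewrite lerDr sqn_ge0.
Qed.

End Main.

Unset Implicit Arguments.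

Theorem theorem5 (R : realType) (alpha : R) (d : nat -> R[i])
    (T : {linear {poly R[i]} -> {poly R[i]}}) :
  -1 < alpha -> Dtilde d ->
  (forall n, T (laguerre (alpha + 1) n) = d n *: laguerre (alpha + 1) n) ->
  (* (i) *)
  (forall g : nat -> R[i], l2 g ->
     (adj_dom (laguerre alpha) T g <->
      l2 (fun k => g k * (d k)^* +
                   ((d k)^* - (prevseq d k)^*) * \sum_(t < k) g t))) /\
  (* (ii) *)
  (forall g h : nat -> R[i], adj_rel (laguerre alpha) T g h ->
     h = (fun k => g k * (d k)^* +
                   ((d k)^* - (prevseq d k)^*) * \sum_(t < k) g t)) /\
  (* (iii) *)
  (forall s : nat,
     adj_dom (laguerre alpha) T (fun k => (k == s)%:R) <->
     l2 (fun k => (d k)^* - (prevseq d k)^*)) /\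
  (* (iv) *)
  (l2 (fun k => (d k)^* - (prevseq d k)^*) ->
     closable (laguerre alpha) T /\
     (forall g : nat -> R[i], l2 g ->
        (clos_dom (laguerre alpha) T g <->
         l2 (fun s => g s * d s +
              csum (fun j => (d (s + 1 + j)%N - d (s + j)%N) * g (s + 1 + j)%N)))) /\
     (forall g h : nat -> R[i], clos_rel (laguerre alpha) T g h ->
        h = (fun s => g s * d s +
              csum (fun j => (d (s + 1 + j)%N - d (s + j)%N) * g (s + 1 + j)%N)))).
Proof.
move=> _ _ HT.
split; [|split; [|split]].
- by move=> g hg; exact: (part_i HT hg).
- by move=> g h H; exact: (adj_formula HT H).
- by move=> s; exact: (part_iii HT s).
- move=> hd; split; [|split].
  + move=> g h h' H1 H2.
    by rewrite (clos_formula HT hd H1) (clos_formula HT hd H2).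
  + by move=> g hg; exact: (part_iv_a HT hd hg).
  + by move=> g h H; exact: (clos_formula HT hd H).
Qed.
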